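(* Let $K\in\{\mathbb{Q}_2(\sqrt{-1}),\mathbb{Q}_2(\sqrt{-5})\}$, $d=2m$ with $m$ odd, $m\ge3$, and $f=a_1x_1^d+\dots+a_sx_s^d$ with all $a_i\in\mathcal{O}\setminus\{0\}$. Suppose that at some level, $f$ has at least five variables all with the same $\pi$-coefficient, or at least six variables with at least three variables having $\pi$-coefficient $0$ and at least three having $\pi$-coefficient $1$. Then $f$ has a nontrivial zero in $K$.
   Context: $\mathcal{O}$ is the ring of integers of $K$ and $\pi$ the uniformizer: $\pi=1+\sqrt{-1}$ for $\mathbb{Q}_2(\sqrt{-1})$ and $\pi=1+\sqrt{-5}$ for $\mathbb{Q}_2(\sqrt{-5})$. Each unit $u$ has a unique expansion $u=c_0+c_1\pi+c_2\pi^2+\cdots$ with $c_j\in\{0,1\}$, $c_0=1$. Writing $a_i=\pi^r u$ with $u$ a unit, the variable $x_i$ is at level $r\bmod d$ (levels are residues modulo $d$), and its $\pi$-coefficient is $c_1$ of $u$. A nontrivial zero is a point of $K^s$, not all coordinates zero, where $f$ vanishes. *)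

(* Defs.v *)
(* K = Q_2(sqrt D), D in {-1,-5}; its ring of integers is
   O = Z_2[sqrt D], realised as the inverse limit of Z[sqrt D] / 2^n. *)
From mathcomp Require Import all_boot all_algebra.
Set Implicit Arguments. Unset Strict Implicit. Unset Printing Implicit Defensive.
Import GRing.Theory Num.Theory.
Local Open Scope ring_scope.

(* Elements a + b sqrt D of Z[sqrt D] as pairs (a, b). *)
Definition zi := (int * int)%type.
Definition zadd (p q : zi) : zi := (p.1 + q.1, p.2 + q.2).
Definition zopp (p : zi) : zi := (- p.1, - p.2).
Definition zmul (D : int) (p q : zi) : zi :=
  (p.1 * q.1 + D * (p.2 * q.2), p.1 * q.2 + p.2 * q.1).
Fixpoint zexp (D : int) (p : zi) (k : nat) : zi :=
  match k with 0%N => (1, 0) | k'.+1 => zmul D p (zexp D p k') end.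
Definition zcong (n : nat) (p q : zi) : Prop :=
  ((2%:Z ^+ n) %| (p.1 - q.1))%Z /\ ((2%:Z ^+ n) %| (p.2 - q.2))%Z.

(* An element of O is a coherent sequence x n in Z[sqrt D] / 2^n. *)
Definition Oseq := nat -> zi.
Definition inO (x : Oseq) : Prop := forall n, zcong n (x n.+1) (x n).
Definition eqO (x y : Oseq) : Prop := forall n, zcong n (x n) (y n).
Definition Ocst (c : zi) : Oseq := fun _ => c.
Definition O0 : Oseq := Ocst (0, 0).
Definition O1 : Oseq := Ocst (1, 0).
Definition Oadd (x y : Oseq) : Oseq := fun n => zadd (x n) (y n).
Definition Oopp (x : Oseq) : Oseq := fun n => zopp (x n).
Definition Omul (D : int) (x y : Oseq) : Oseq := fun n => zmul D (x n) (y n).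
Definition Oexp (D : int) (x : Oseq) (k : nat) : Oseq := fun n => zexp D (x n) k.
Definition Opi : Oseq := Ocst (1, 1).

Definition Ounit (D : int) (u : Oseq) : Prop :=
  exists v, inO v /\ eqO (Omul D u v) O1.

(* The pi-coefficient c_1 of the unit u (expansion u = 1 + c_1 pi + c_2 pi^2 + ...,
   c_j in {0,1}) equals c iff u - (1 + c pi) is divisible by pi^2 in O. *)
Definition pi_coeff (D : int) (u : Oseq) (c : bool) : Prop :=
  exists w, inO w /\
    eqO (Oadd u (Oopp (Oadd O1 (if c then Opi else O0)))) (Omul D (Oexp D Opi 2) w).

Definition at_level (D : int) (d : nat) (a : Oseq) (l : nat) (c : bool) : Prop :=
  exists (r : nat) (u : Oseq),
    (r %% d = l)%N /\ inO u /\ Ounit D u /\ eqO a (Omul D (Oexp D Opi r) u) /\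
    pi_coeff D u c.

Definition diag_form (D : int) (d s : nat) (a x : 'I_s -> Oseq) : Oseq :=
  fun n => \big[zadd/(0, 0)]_(i < s) zmul D (a i n) (zexp D (x i n) d).

(* Main.v *)
From HB Require Import structures.
Require Import Defs.
From mathcomp Require Import all_boot all_algebra.
From mathcomp Require Import ring zify.
Import GRing.Theory Num.Theory.
Local Open Scope ring_scope.
Set Implicit Arguments. Unset Strict Implicit. Unset Printing Implicit Defensive.


Definition zr (D : int) : Type := (int * int)%type.
HB.instance Definition _ D := GRing.Zmodule.copy (zr D) (int * int)%type.

Section R.
Variable D : int.
Let one : zr D := (1, 0).
Let mul : zr D -> zr D -> zr D := zmul D.
Lemma zr_eq (p q : zr D) : p.1 = q.1 -> p.2 = q.2 -> p = q.
Proof. by case: p q => ? ? [? ?] /= -> ->. Qed.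
Lemma mulA : associative mul.
Proof. move=> [a b] [c e] [f g]; apply: zr_eq; rewrite /mul /zmul /=; ring. Qed.
Lemma mulC : commutative mul.
Proof. move=> [a b] [c e]; apply: zr_eq; rewrite /mul /zmul /=; ring. Qed.
Lemma mul1 : left_id one mul.
Proof. move=> [a b]; apply: zr_eq; rewrite /mul /one /zmul /=; ring. Qed.
Lemma mulDl : left_distributive mul +%R.
Proof. move=> [a b] [c e] [f g]; apply: zr_eq; rewrite /mul /zmul /=; ring. Qed.
Lemma one_neq0 : one != 0.
Proof. by []. Qed.
End R.
HB.instance Definition _ D := GRing.Zmodule_isComNzRing.Build (zr D)
  (@mulA D) (@mulC D) (@mul1 D) (@mulDl D) (@one_neq0 D).

Lemma zmulE D (p q : zi) : zmul D p q = ((p : zr D) * q).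
Proof. by []. Qed.
Lemma zaddE D (p q : zi) : zadd p q = ((p : zr D) + q).
Proof. by []. Qed.
Lemma zexpE D (p : zi) k : zexp D p k = ((p : zr D) ^+ k).
Proof. elim: k => [|k IH] //=. by rewrite exprS -IH. Qed.
Lemma zmulE' D (p q : zr D) : (p * q) = ((p.1 * q.1 + D * (p.2 * q.2), p.1 * q.2 + p.2 * q.1) : zr D).
Proof. by []. Qed.

Section Ideal.
Variable D : int.
Local Notation R := (zr D).
Definition M n (z : R) := exists f : R, z = (2%:R ^+ n : R) * f.
Lemma two_powE n : (2%:R ^+ n : R) = (2%:Z ^+ n, 0).
Proof.
elim: n => [|n IH] //. rewrite exprS IH; apply: zr_eq; rewrite /= /zmul /= ?exprS; ring.
Qed.
Lemma MscaleE n (f : R) : (2%:R ^+ n : R) * f = ((2%:Z ^+ n * f.1, 2%:Z ^+ n * f.2) : R).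
Proof. rewrite two_powE; apply: zr_eq; rewrite /= ; ring. Qed.
Lemma M_zcong n (p q : zi) : zcong n p q <-> M n ((p : R) - q).
Proof.
split.
- case=> [h1 h2]; exists (((p.1 - q.1) %/ 2%:Z ^+ n)%Z, ((p.2 - q.2) %/ 2%:Z ^+ n)%Z).
  rewrite MscaleE; apply: zr_eq => /=.
  + by rewrite mulrC divzK.
  + by rewrite mulrC divzK.
- case=> f; rewrite MscaleE => E; split.
  + have -> : (p.1 - q.1 = ((p : R) - q).1) by []. by rewrite E /= dvdz_mulr.
  + have -> : (p.2 - q.2 = ((p : R) - q).2) by []. by rewrite E /= dvdz_mulr.
Qed.
Lemma M0 n : M n 0.
Proof. by exists 0; rewrite mulr0. Qed.
Lemma MD n x y : M n x -> M n y -> M n (x + y).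
Proof. by case=> f -> [g ->]; exists (f + g); rewrite mulrDr. Qed.
Lemma MN n x : M n x -> M n (- x).
Proof. by case=> f ->; exists (- f); rewrite mulrN. Qed.
Lemma MB n x y : M n x -> M n y -> M n (x - y).
Proof. by move=> hx hy; apply: MD => //; apply: MN. Qed.
Lemma MMl n x y : M n y -> M n (x * y).
Proof. by case=> f ->; exists (x * f); rewrite mulrCA. Qed.
Lemma MMr n x y : M n x -> M n (x * y).
Proof. by move=> h; rewrite mulrC; apply: MMl. Qed.
Lemma MM a b x y : M a x -> M b y -> M (a + b) (x * y).
Proof. by case=> f -> [g ->]; exists (f * g); rewrite exprD; ring. Qed.
Lemma Mle n k x : (k <= n)%N -> M n x -> M k x.
Proof.
move=> /subnK <- [f ->]; exists (2%:R ^+ (n - k) * f).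
by rewrite exprD; ring.
Qed.
Lemma Mtrans n x y z : M n (x - y) -> M n (y - z) -> M n (x - z).
Proof. move=> h1 h2; have := MD h1 h2. by rewrite addrA subrK. Qed.
Lemma Msym n x y : M n (x - y) -> M n (y - x).
Proof. by move/MN; rewrite opprB. Qed.
Lemma Mrefl n x : M n (x - x).
Proof. by rewrite subrr; apply: M0. Qed.
Lemma Msum n (I : finType) (F : I -> R) : (forall i, M n (F i)) -> M n (\sum_i F i).
Proof.
move=> h; apply: (big_ind (M n)) => //; [exact: M0 | exact: MD].
Qed.
Lemma Mpow n k x : M n x -> M (n * k.+1) (x ^+ k.+1).
Proof.
move=> h; elim: k => [|k IH]; first by rewrite muln1 expr1.
by rewrite exprS mulnS; apply: MM.
Qed.
End Ideal.

Section Hensel.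
Variable D : int.
Local Notation R := (zr D).
Definition unitish (x : R) := M 1 (x * x - 1).

Lemma binom1 (y h : R) N : exists w : R,
  (y + h) ^+ N.+1 = y ^+ N.+1 + N.+1%:R * y ^+ N * h + h ^+ 2 * w.
Proof.
elim: N => [|N [w IH]].
  by exists 0; rewrite !expr1 expr0; ring.
exists (N.+1%:R * y ^+ N + (y + h) * w).
have e : (N.+2%:R : R) = N.+1%:R + 1 by rewrite natr1.
rewrite e [in LHS]exprS IH (exprS y N.+1) (exprS y N); ring.
Qed.

Lemma unitishM x y : unitish x -> unitish y -> unitish (x * y).
Proof.
rewrite /unitish => hx hy; have -> : x * y * (x * y) - 1 = (x * x - 1) * (y * y) + (y * y - 1) by ring.
by apply: MD => //; apply: MMr.
Qed.
Lemma unitish1 : unitish 1.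
Proof. rewrite /unitish mulr1 subrr; exact: M0. Qed.
Lemma unitishX x k : unitish x -> unitish (x ^+ k).
Proof.
move=> hx; elim: k => [|k IH]; first by rewrite expr0; exact: unitish1.
by rewrite exprS; apply: unitishM.
Qed.

Lemma inO_cong (x : nat -> R) : (forall n, M n (x n.+1 - x n)) ->
  forall n k, (n <= k)%N -> M n (x k - x n).
Proof.
move=> h n; elim=> [|k IH]; first by rewrite leqn0 => /eqP ->; exact: Mrefl.
rewrite leq_eqVlt => /orP [/eqP -> | lt]; first exact: Mrefl.
apply: (@Mtrans _ _ _ (x k)); last by apply: IH; rewrite -ltnS.
by apply: (Mle _ (h k)).
Qed.

Definition divk k (z : R) : R := ((z.1 %/ 2%:Z ^+ k)%Z, (z.2 %/ 2%:Z ^+ k)%Z).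
Lemma divkE k (z : R) : M k z -> z = 2%:R ^+ k * divk k z.
Proof.
case=> f E; rewrite MscaleE; apply: zr_eq => /=; rewrite E MscaleE /=.
- by rewrite mulKz //; apply: expf_neq0.
- by rewrite mulKz //; apply: expf_neq0.
Qed.

Variables (m : nat) (u T : nat -> R) (s : R).
Hypothesis modd : odd m.
Hypothesis Hu : forall n, M n (u n.+1 - u n).
Hypothesis HT : forall n, M n (T n.+1 - T n).
Hypothesis Huu : forall n, unitish (u n.+1).
Hypothesis Hs : unitish s.
Local Notation d := (2 * m)%N.
Hypothesis H3 : M 3 (u 3 * s ^+ d - T 3).

Definition G k (y : R) := u k * y ^+ d - T k.
Definition lift k (y : R) :=
  y + 2%:R ^+ k.-1 * (divk k (G k.+1 y) * (u k.+1 * y ^+ d.-1)).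

Lemma step j y : M (j + 3) (G (j + 3) y) -> unitish y ->
  [/\ M (j + 3).+1 (G (j + 3).+1 (lift (j + 3) y)), unitish (lift (j + 3) y)
    & M (j + 2) (lift (j + 3) y - y)].
Proof.
move=> hG hy.
have hG' : M (j + 3) (G (j + 3).+1 y).
  have -> : G (j + 3).+1 y = G (j + 3) y + ((u (j + 3).+1 - u (j + 3)) * y ^+ d
     - (T (j + 3).+1 - T (j + 3))) by rewrite /G; ring.
  apply: MD => //; apply: MB; last exact: HT.
  by apply: MMr; exact: Hu.
set f := divk (j + 3) (G (j + 3).+1 y).
have Ef := divkE hG'; rewrite -/f in Ef.
set w := u (j + 3).+1 * y ^+ d.-1.
have hw : unitish w by apply: unitishM; [exact: Huu | exact: unitishX].
rewrite /lift -/f -/w.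
have -> : (j + 3).-1 = j.+2 by rewrite addn3.
set t := f * w.
have [z Ez] := binom1 y (2%:R ^+ j.+2 * t) d.-1.
have dE : d.-1.+1 = d by rewrite prednK // muln_gt0 /=; case: (m) modd.
rewrite dE in Ez.
split.
- have -> : G (j + 3).+1 (y + 2%:R ^+ j.+2 * t) =
     G (j + 3).+1 y + u (j + 3).+1 * (d%:R * y ^+ d.-1 * (2%:R ^+ j.+2 * t)
        + (2%:R ^+ j.+2 * t) ^+ 2 * z).
    by rewrite /G Ez; ring.
  rewrite Ef.
  have -> : (2 ^+ (j + 3) * f + u (j + 3).+1 * ((2 * m)%:R * y ^+ d.-1 *
     (2 ^+ j.+2 * t) + (2 ^+ j.+2 * t) ^+ 2 * z) : R) =
     2 ^+ (j + 3) * f * (1 + m%:R * (w * w))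
       + 2 ^+ (j + 3).+1 * (2 ^+ j * (u (j + 3).+1 * t ^+ 2 * z)).
    rewrite natrM /t /w.
    have -> : (j + 3).+1 = (j + 4)%N by rewrite -addn1 -addnA.
    rewrite !exprD !exprS; ring.
  apply: MD; last by eexists.
  rewrite -[(j + 3).+1]addn1; apply: MM; first by exists f.
  have -> : 1 + m%:R * (w * w) = (1 + m%:R) + m%:R * (w * w - 1) :> R by ring.
  apply: MD; last exact: MMl.
  exists (1 + (m./2)%:R).
  by rewrite -[in LHS](odd_double_half m) modd natrD -muln2 natrM /=; ring.
- rewrite /unitish.
  have -> : (y + 2 ^+ j.+2 * t) * (y + 2 ^+ j.+2 * t) - 1 =
    (y * y - 1) + 2 ^+ 1 * (2 ^+ j.+1 * t * (2 * y + 2 ^+ j.+2 * t)) :> R.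
    by rewrite !exprS; ring.
  by apply: MD => //; eexists.
- by exists t; rewrite addn2; ring.
Qed.

Fixpoint Y j : R := match j with 0%N => s | j'.+1 => lift (j' + 3) (Y j') end.

Lemma Y_inv j : M (j + 3) (G (j + 3) (Y j)) /\ unitish (Y j).
Proof.
elim: j => [|j [h1 h2]]; first by split.
have [a b _] := step h1 h2.
by rewrite /= addSn.
Qed.

Lemma hensel : exists y : (nat -> R), (forall n, M n (y n.+1 - y n)) /\ (forall n, M n (u n * y n ^+ d - T n)) /\ (forall n, unitish (y n)).
Proof.
exists Y; split; [|split].
- move=> n; have [h1 h2] := Y_inv n.
  have [_ _ c] := step h1 h2.
  by apply: (Mle _ c); rewrite leq_addr.
- move=> n; have [h1 _] := Y_inv n.
  have -> : u n * Y n ^+ d - T n = G (n + 3) (Y n) - (u (n + 3) - u n) * Y n ^+ d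
    + (T (n + 3) - T n) by rewrite /G; ring.
  apply: MD; last by apply: inO_cong => //; rewrite leq_addr.
  apply: MB; first by apply: (Mle _ h1); rewrite leq_addr.
  by apply: MMr; apply: inO_cong => //; rewrite leq_addr.
- by move=> n; case: (Y_inv n).
Qed.
End Hensel.

Definition cpi (c : bool) : zi := if c then (2, 1) else (1, 0).
Definition ofN (a b : nat) : zi := (a%:Z, b%:Z).
Section Glue.
Variable D : int.
Hypothesis HD : D = -1 \/ D = -5.
Local Notation R := (zr D).
Definition piR : R := (1, 1).

Lemma Mcong_mul n (x x' y y' : R) : M n (x - x') -> M n (y - y') -> M n (x * y - x' * y').
Proof.
move=> h1 h2; have -> : x * y - x' * y' = (x - x') * y + x' * (y - y') by ring.
by apply: MD; [apply: MMr | apply: MMl].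
Qed.
Lemma Mcong_pow n k (x y : R) : M n (x - y) -> M n (x ^+ k - y ^+ k).
Proof.
move=> h; elim: k => [|k IH]; first by rewrite !expr0 subrr; exact: M0.
by rewrite !exprS; apply: Mcong_mul.
Qed.
Lemma unitish_cong (x y : R) : M 1 (x - y) -> unitish x -> unitish y.
Proof.
move=> h hx; rewrite /unitish.
have -> : y * y - 1 = (x * x - 1) - (x * y - y * y) - (x * x - x * y) by ring.
apply: MB; [apply: MB => //|].
- have -> : x * y - y * y = (x - y) * y by ring.
  by apply: MMr.
- have -> : x * x - x * y = x * (x - y) by ring.
  by apply: MMl.
Qed.
Lemma notM1_one : ~ M 1 (1 : R).
Proof.
case=> f; rewrite MscaleE => /(congr1 fst) /= E.
have := dvdz_mulr f.1 (dvdzz (2%:Z ^+ 1)); rewrite -E.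
by [].
Qed.
Lemma notM1_pi : ~ M 1 piR.
Proof.
case=> f; rewrite MscaleE => /(congr1 fst) /= E.
have := dvdz_mulr f.1 (dvdzz (2%:Z ^+ 1)); rewrite -E.
by [].
Qed.
Lemma unitish_notM1 (y : R) : unitish y -> M 1 y -> False.
Proof.
move=> hu hy; apply: notM1_one.
have -> : (1 : R) = y * y - (y * y - 1) by ring.
by apply: MB => //; apply: MMl.
Qed.
Lemma M1_pi2 : M 1 (piR * piR).
Proof.
case: HD => ->.
- by exists (0, 1).
- by exists (-2, 1).
Qed.
Lemma unitish_cpi c : unitish (cpi c : R).
Proof.
rewrite /unitish; case: c; last by rewrite /cpi mulr1 subrr; exact: M0.
case: HD => ->.
- by exists (1, 2).
- by exists (-1, 2).
Qed.
Lemma notM1_piw_unit (w v : R) : unitish v -> M 1 (piR * w - v) -> False.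
Proof.
move=> hv h; apply: notM1_pi.
have h1 : M 1 (piR * w * v - 1).
  have -> : piR * w * v - 1 = (piR * w - v) * v + (v * v - 1) by ring.
  by apply: MD => //; apply: MMr.
have -> : piR = (piR * piR) * (w * v) - piR * (piR * w * v - 1) by ring.
by apply: MB; [apply: MMr; exact: M1_pi2 | apply: MMl].
Qed.

Lemma Mcancel2 k n (w : R) : M (k + n) (2%:R ^+ k * w) -> M n w.
Proof.
case=> f; rewrite exprD -mulrA => E; exists f.
have hk : (2%:R ^+ k : R) = (2%:Z ^+ k, 0) := two_powE D k.
apply: zr_eq.
- move: (congr1 fst E); rewrite !MscaleE /= => E1.
  apply: (mulfI (x := 2%:Z ^+ k)); first by apply: expf_neq0.
  by rewrite E1.
- move: (congr1 snd E); rewrite !MscaleE /= => E1.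
  apply: (mulfI (x := 2%:Z ^+ k)); first by apply: expf_neq0.
  by rewrite E1.
Qed.

Lemma cancel_pi r (z : R) : M r.+1 (piR ^+ r * z) -> M 1 z.
Proof.
move=> h.
have [Q0 [EQ hQ]] : exists Q0 : R, piR * (1, -1) = 2%:R * Q0 /\ M 1 (Q0 - 1).
  case: HD => ->.
  - exists 1; split; first by apply: zr_eq.
    by rewrite subrr; exact: M0.
  - exists (3, 0); split; first by apply: zr_eq.
    by exists 1; apply: zr_eq.
have h2 : M r.+1 (2%:R ^+ r * (Q0 ^+ r * z)).
  have -> : 2%:R ^+ r * (Q0 ^+ r * z) = ((1, -1) : R) ^+ r * (piR ^+ r * z).
    by rewrite mulrA -exprMn -EQ exprMn; ring.
  exact: MMl.
move: h2; rewrite -addn1 => /Mcancel2 h3.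
have -> : z = Q0 ^+ r * z - (Q0 ^+ r - 1 ^+ r) * z by rewrite expr1n; ring.
by apply: MB => //; apply: MMr; apply: Mcong_pow.
Qed.

Lemma red8 (x : R) : exists a b, (a < 8)%N /\ (b < 8)%N /\ M 3 (x - ofN a b).
Proof.
have H (z : int) : exists a, (a < 8)%N /\ exists q, z - a%:Z = 8 * q.
  exists (absz (z %% 8)%Z); split.
  - have := ltz_pmod z (isT : (0 < 8 :> int)).
    by rewrite -[X in X < _](@gez0_abs (z %% 8)%Z) ?modz_ge0.
  - exists (z %/ 8)%Z; rewrite gez0_abs ?modz_ge0 //.
    by rewrite {1}(divz_eq z 8) addrK mulrC.
have [a [ha [q1 E1]]] := H x.1; have [b [hb [q2 E2]]] := H x.2.
exists a, b; split => //; split => //.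
exists (q1, q2); rewrite MscaleE; apply: zr_eq => /=.
- by rewrite E1.
- by rewrite E2.
Qed.
End Glue.

Definition rep (D : int) (c : bool) (k : nat) : zi :=
  match c, k with
  | false, 0%N => (1, 0) | false, 1%N => (1, 2) | false, 2%N => (1, 4) | false, _ => (1, 6)
  | true, 0%N => (0, 1) | true, 1%N => if D == -1 then (0, 3) else (0, 5)
  | true, 2%N => (2, 1) | true, _ => if D == -1 then (2, 5) else (2, 3)
  end.
Definition rtz (e : nat) : zi :=
  match e with 1%N => (1, 0) | 2%N => (0, 1) | 3%N => (1, 2) | 4%N => (2, 1) | _ => (0, 0) end.
Definition zcongb n (p q : zi) : bool :=
  ((2%:Z ^+ n %| p.1 - q.1)%Z && (2%:Z ^+ n %| p.2 - q.2)%Z).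
Definition unitb D (x : zi) := zcongb 1 (zmul D x x) (1, 0).
Definition classb D c : bool :=
  all (fun a => all (fun b => zcongb 1 (ofN a b) (cpi c) ==>
    has (fun k => has (fun s1 => has (fun s2 =>
      unitb D (ofN s1 s2) &&
      zcongb 3 (zmul D (ofN a b) (zmul D (ofN s1 s2) (ofN s1 s2))) (rep D c k))
      (iota 0 8)) (iota 0 8)) (iota 0 4)) (iota 0 8)) (iota 0 8).
Definition pow4b D : bool :=
  all (fun a => all (fun b => unitb D (ofN a b) ==> zcongb 3 (zexp D (ofN a b) 4) (1, 0))
   (iota 0 8)) (iota 0 8).

Lemma classb_ok1 : classb (-1) false && classb (-1) true.
Proof. vm_compute. reflexivity. Qed.
Lemma classb_ok2 : classb (-5) false && classb (-5) true.
Proof. vm_compute. reflexivity. Qed.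
Lemma pow4_ok : pow4b (-1) && pow4b (-5).
Proof. vm_compute. reflexivity. Qed.

Definition pr8 D c k e : nat * nat :=
  let z := zmul D (rep D c k) (zexp D (rtz e) 2) in (absz (z.1 %% 8)%Z, absz (z.2 %% 8)%Z).
Fixpoint srch (opts : seq (seq (nat * nat))) (acc : nat * nat) (nz : bool) : option (seq nat) :=
  match opts with
  | [::] => if nz && ((acc.1 %% 8 == 0)%N && (acc.2 %% 8 == 0)%N) then Some [::] else None
  | o :: rest =>
    let fix tryE (o' : seq (nat * nat)) (e : nat) :=
      match o' with
      | [::] => None
      | p :: o'' =>
        match srch rest ((acc.1 + p.1) %% 8, (acc.2 + p.2) %% 8)%N (nz || (e != 0%N)) with
        | Some es => Some (e :: es)
        | None => tryE o'' e.+1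
        end
      end in tryE o 0%N
  end.
Definition search D n (pat : nat -> bool) (ks : seq nat) : seq nat :=
  odflt [::] (srch [seq [seq pr8 D (pat j) (nth 0%N ks j) e | e <- iota 0 5] | j <- iota 0 n] (0, 0)%N false).
Definition okb D n (pat : nat -> bool) (ks es : seq nat) : bool :=
  has (fun j => rtz (nth 0%N es j) != (0, 0)) (iota 0 n) &&
  zcongb 3 (foldr zadd (0, 0) [seq zmul D (rep D (pat j) (nth 0%N ks j)) (zexp D (rtz (nth 0%N es j)) 2) | j <- iota 0 n]) (0, 0).
Fixpoint tuples n : seq (seq nat) :=
  if n is n'.+1 then [seq k :: t | k <- iota 0 4, t <- tuples n'] else [:: [::]].
Definition tabb D n (pat : nat -> bool) : bool :=
  all (fun ks => okb D n pat ks (search D n pat ks)) (tuples n).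

Definition pat33 (j : nat) : bool := (3 <= j)%N.
Lemma tab5 : [&& tabb (-1) 5 (fun _ => false), tabb (-1) 5 (fun _ => true),
   tabb (-5) 5 (fun _ => false) & tabb (-5) 5 (fun _ => true)].
Proof. vm_compute. reflexivity. Qed.
Lemma tab6 : tabb (-1) 6 pat33 && tabb (-5) 6 pat33.
Proof. vm_compute. reflexivity. Qed.

Lemma zcongbP D n (p q : zi) : zcongb n p q -> M n ((p : zr D) - q).
Proof. by move/andP=> [h1 h2]; apply/M_zcong. Qed.
Lemma zcongbP' D n (p q : zi) : M n ((p : zr D) - q) -> zcongb n p q.
Proof. by move/M_zcong=> [h1 h2]; apply/andP. Qed.

Lemma mem_tuples n ks : size ks = n -> all (fun k => k < 4)%N ks -> ks \in tuples n.
Proof.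
elim: n ks => [|n IH] [|k t] //= [st] /andP [hk ht].
have ht' := IH t st ht.
by case: k hk => [|[|[|[|k]]]] // _; rewrite !mem_cat ?(map_f (cons _) ht') ?orbT.
Qed.

Section Fin.
Variable D : int.
Hypothesis HD : D = -1 \/ D = -5.
Local Notation R := (zr D).

Lemma classb_D c : classb D c.
Proof. by case: HD => ->; case: c; [have /andP[] := classb_ok1|have /andP[] := classb_ok1|
  have /andP[] := classb_ok2|have /andP[] := classb_ok2]. Qed.
Lemma pow4b_D : pow4b D.
Proof. by case: HD => ->; have /andP[] := pow4_ok. Qed.

Lemma class_ex c (rho : R) : M 1 (rho - cpi c) ->
  exists k, (k < 4)%N /\ exists sg : R, unitish sg /\ M 3 (rho * (sg * sg) - rep D c k).
Proof.
move=> hp; have [a [b [ha [hb hr]]]] := red8 rho.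
have hab : zcongb 1 (ofN a b) (cpi c).
  apply: (@zcongbP' D).
  have -> : (ofN a b : R) - cpi c = (rho - cpi c) - (rho - ofN a b) by ring.
  by apply: MB => //; apply: (Mle _ hr).
have := classb_D c; rewrite /classb => /allP /(_ a); rewrite mem_iota add0n => /(_ ha).
move=> /allP /(_ b); rewrite mem_iota add0n => /(_ hb); rewrite hab implyTb.
case/hasP=> k; rewrite mem_iota add0n => hk.
case/hasP=> s1 _; case/hasP=> s2 _ /andP [hu hc].
exists k; split => //; exists (ofN s1 s2); split; first exact: (@zcongbP D _ _ _ hu).
have h2 := @zcongbP D _ _ _ hc.
apply: (@Mtrans D 3 _ ((ofN a b : R) * ((ofN s1 s2 : R) * (ofN s1 s2 : R)))); last exact h2.
by apply: Mcong_mul => //; exact: Mrefl.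
Qed.

Lemma pow4 (sg : R) : unitish sg -> M 3 (sg ^+ 4 - 1).
Proof.
move=> hu; have [a [b [ha [hb hr]]]] := red8 sg.
have hu' : unitish (ofN a b : R) by apply: (unitish_cong _ hu); exact: (Mle _ hr).
have hb' : unitb D (ofN a b) by exact: (@zcongbP' D 1 _ _ hu').
have := pow4b_D; rewrite /pow4b => /allP /(_ a); rewrite mem_iota add0n => /(_ ha).
move=> /allP /(_ b); rewrite mem_iota add0n => /(_ hb); rewrite hb' implyTb => h4.
have h5 := @zcongbP D _ _ _ h4; rewrite zexpE in h5.
have -> : sg ^+ 4 - 1 = (sg ^+ 4 - (ofN a b : R) ^+ 4) + ((ofN a b : R) ^+ 4 - 1) by ring.
by apply: MD; [apply: Mcong_pow | exact h5].
Qed.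

Lemma root_unitish e : rtz e != (0, 0) -> unitish (rtz e : R).
Proof.
move=> h; rewrite /unitish; apply: (@zcongbP D 1 (zmul D (rtz e) (rtz e)) (1, 0)).
by case: HD => ->; move: h; case: e => [|[|[|[|[|e]]]]].
Qed.

Lemma table_ex n (pat : nat -> bool) (Htab : tabb D n pat) (k : 'I_n -> nat)
  (Hk : forall j, (k j < 4)%N) :
  exists e : 'I_n -> nat, (exists j, rtz (e j) != (0, 0)) /\
    M 3 (\sum_(j < n) (rep D (pat j) (k j) : R) * (rtz (e j) : R) ^+ 2).
Proof.
set ks := [seq k j | j <- enum 'I_n].
have hks : ks \in tuples n.
  apply: mem_tuples; first by rewrite size_map size_enum_ord.
  by apply/allP => x /mapP [j _ ->].
have nthk (j : 'I_n) : nth 0%N ks j = k j.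
  by rewrite (nth_map j) ?size_enum_ord // nth_ord_enum.
have := Htab; rewrite /tabb => /allP /(_ ks hks) /andP [h1 h2].
exists (fun j : 'I_n => nth 0%N (search D n pat ks) j); split.
- case/hasP: h1 => j; rewrite mem_iota add0n => hj hr.
  by exists (Ordinal hj).
- have := @zcongbP D _ _ _ h2; rewrite subr0.
  congr M.
  rewrite foldrE big_map.
  have -> : \big[zadd/(0, 0)]_(j <- iota 0 n) zmul D (rep D (pat j) (nth 0%N ks j))
     (zexp D (rtz (nth 0%N (search D n pat ks) j)) 2) =
     \sum_(0 <= j < n) (rep D (pat j) (nth 0%N ks j) : R) *
       (rtz (nth 0%N (search D n pat ks) j) : R) ^+ 2.
    rewrite /index_iota subn0; apply: eq_bigr => j _; by rewrite zexpE.
  rewrite big_mkord; apply: eq_bigr => j _.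
  by rewrite nthk.
Qed.

Lemma powd_sq m (s : R) : odd m -> M 3 (s ^+ 4 - 1) -> M 3 (s ^+ (2 * m) - s ^+ 2).
Proof.
move=> hm h.
have -> : (2 * m = 2 + 4 * m./2)%N.
  by rewrite -[in LHS](odd_double_half m) hm -muln2; lia.
rewrite exprD exprM.
have -> : s ^+ 2 * (s ^+ 4) ^+ m./2 - s ^+ 2 = s ^+ 2 * ((s ^+ 4) ^+ m./2 - 1 ^+ m./2).
  by rewrite expr1n; ring.
by apply: MMl; apply: Mcong_pow.
Qed.
End Fin.

Section Core.
Variable D : int.
Hypothesis HD : D = -1 \/ D = -5.
Local Notation R := (zr D).
Variable m : nat.
Hypothesis modd : odd m.
Local Notation d := (2 * m)%N.

Lemma at_level_data (a : Oseq) l c : at_level D d a l c ->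
  exists r (u : nat -> R), [/\ (r %% d = l)%N, forall n, M n (u n.+1 - u n),
    forall n, M n ((a n : R) - (piR D) ^+ r * u n) & forall n, M 1 (u n.+1 - cpi c)].
Proof.
case=> r [u [hr [hu [_ [ha [w [hw hpc]]]]]]].
exists r, u; split => //.
- by move=> n; apply/M_zcong; exact: (hu n).
- move=> n; have := ha n; move/(M_zcong D); rewrite /Omul /Oexp /Opi /Ocst (zexpE D) => h.
  exact h.
- move=> n; have := hpc n.+1; move/(M_zcong D); rewrite /Omul /Oexp /Opi /Ocst (zexpE D) => h.
  have h1 : M 1 (((u n.+1 : R) - cpi c) - (piR D) ^+ 2 * w n.+1).
    by apply: (Mle (isT : (1 <= n.+1)%N)); move: h; clear hpc; case: c => h; exact h.
  have -> : (u n.+1 : R) - cpi c = ((u n.+1 : R) - cpi c - (piR D) ^+ 2 * w n.+1) + (piR D) ^+ 2 * w n.+1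
    by ring.
  by apply: MD => //; apply: MMr; rewrite expr2; exact: M1_pi2.
Qed.

Lemma core l n (pat : nat -> bool) (s : nat) (a : 'I_s -> Oseq) (g : 'I_n -> 'I_s) :
  tabb D n pat -> injective g ->
  (forall j : 'I_n, at_level D d (a (g j)) l (pat j)) ->
  exists x : 'I_s -> Oseq, (forall i, inO (x i)) /\ (exists i, ~ eqO (x i) O0) /\
    eqO (diag_form D d a x) O0.
Proof.
move=> Htab ginj Hlev.
have H1 := fun j => at_level_data (Hlev j).
have /fin_all_exists [r Hr] := H1.
have /fin_all_exists [u Hu] := Hr.
have H2 : forall j, exists k, (k < 4)%N /\ exists sg : R, unitish sg /\
    M 3 (u j 3 * (sg * sg) - rep D (pat j) k).
  by move=> j; apply: (class_ex HD); case: (Hu j) => _ _ _ /(_ 2%N).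
have /fin_all_exists [k Hk] := H2.
have /fin_all_exists [sg Hsg] : forall j, exists sg0 : R, unitish sg0 /\
    M 3 (u j 3 * (sg0 * sg0) - rep D (pat j) (k j)) by move=> j; case: (Hk j).
have [e [[j0 hj0] Hsum]] := @table_ex D n pat Htab k (fun j => (Hk j).1).
pose S j : R := sg j * (rtz (e j) : R).
have HSu j : rtz (e j) != (0, 0) -> unitish (S j).
  by move=> h; apply: unitishM; [exact: (Hsg j).1 | exact: (root_unitish HD)].
have dpos : (0 < d)%N by rewrite muln_gt0 /=; case: (m) modd.
have HS j : M 3 (S j ^+ d - S j ^+ 2).
  case: (eqVneq (rtz (e j)) (0, 0)) => h.
  - have -> : S j = 0 by rewrite /S h; apply: zr_eq => /=; ring.
    by rewrite !expr0n /= eqn0Ngt dpos /= subrr; exact: M0.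
  - by apply: powd_sq => //; apply: (pow4 HD); apply: HSu.
have Hsum3 : M 3 (\sum_(j : 'I_n) u j 3 * S j ^+ d).
  have -> : \sum_(j : 'I_n) u j 3 * S j ^+ d = \sum_(j : 'I_n) (u j 3 * (S j ^+ d - S j ^+ 2) +
      (u j 3 * (sg j * sg j) - (rep D (pat j) (k j) : R)) * (rtz (e j) : R) ^+ 2) +
      \sum_(j : 'I_n) (rep D (pat j) (k j) : R) * (rtz (e j) : R) ^+ 2.
    rewrite -big_split /=; apply: eq_bigr => j _; rewrite /S; ring.
  apply: MD => //; apply: Msum => j; apply: MD; first by apply: MMl.
  by apply: MMr; case: (Hsg j) => _ h; exact h.

pose T nn : R := - \sum_(j : 'I_n | j != j0) u j nn * S j ^+ d.
have HuC j nn : M nn (u j nn.+1 - u j nn) by case: (Hu j).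
have HT nn : M nn (T nn.+1 - T nn).
  have -> : T nn.+1 - T nn = - (\sum_(j : 'I_n | j != j0) (u j nn.+1 * S j ^+ d - u j nn * S j ^+ d)).
    by rewrite sumrB /T; ring.
  apply: MN; apply: (big_ind (M nn)); [exact: M0 | exact: MD |] => j _.
  by rewrite -mulrBl; apply: MMr.
have Huu nn : unitish (u j0 nn.+1).
  apply: (unitish_cong _ (unitish_cpi HD (pat j0))); apply: Msym.
  by case: (Hu j0) => _ _ _; apply.
have H3 : M 3 (u j0 3 * S j0 ^+ d - T 3).
  by move: Hsum3; rewrite (bigD1 j0) //= /T opprK.
have [y [hyc [hyeq hyu]]] := hensel modd (HuC j0) HT Huu (HSu j0 hj0) H3.
pose Y j nn : R := if j == j0 then y nn else S j.
have HY nn : M nn (\sum_(j : 'I_n) u j nn * Y j nn ^+ d).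
  rewrite (bigD1 j0) //= /Y eqxx.
  have -> : \sum_(j : 'I_n | j != j0) u j nn * (if j == j0 then y nn else S j) ^+ d =
     \sum_(j : 'I_n | j != j0) u j nn * S j ^+ d.
    by apply: eq_bigr => j /negbTE ->.
  by move: (hyeq nn); rewrite /T opprK.
have HYc j nn : M nn (Y j nn.+1 - Y j nn).
  by rewrite /Y; case: (j == j0); [exact: hyc | rewrite subrr; exact: M0].
pose q j := (r j %/ d)%N.
pose K := \max_(j : 'I_n) q j.
have hqK j : (q j <= K)%N by apply: leq_bigmax.
pose X j nn : R := (piR D) ^+ (K - q j) * Y j nn.
pose x (i : 'I_s) : Oseq := if [pick j | g j == i] is Some j then X j else O0.
have xg j : x (g j) = X j.
  rewrite /x; case: pickP => [j' /eqP /ginj -> // | /(_ j)]; by rewrite eqxx.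
have xn i : i \notin [set g j | j in 'I_n] -> x i = O0.
  move=> hi; rewrite /x; case: pickP => // j' /eqP E.
  by move: hi; rewrite -E imset_f.
exists x; split; [|split].
- move=> i; rewrite /x; case: pickP => [j _ | _] nn; apply/M_zcong.
  + by rewrite /X -mulrBr; apply: MMl.
  + exact (M0 D nn).
- exists (g j0); rewrite xg => H.
  set e0 := (K - q j0)%N.
  have h0 : M e0.+1 (X j0 e0.+1 - 0) by apply/(M_zcong D); exact: (H e0.+1).
  rewrite subr0 /X in h0; have := cancel_pi HD h0; rewrite /Y eqxx.
  by apply: unitish_notM1.
- move=> nn; apply/M_zcong.
  suff h : M nn ((diag_form D d a x nn : R) - 0) by exact h.
  rewrite subr0.
  have -> : (diag_form D d a x nn : R) = \sum_(i : 'I_s) (a i nn : R) * (x i nn : R) ^+ d.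
    by rewrite /diag_form; apply: eq_bigr => i _; rewrite zexpE.
  rewrite (bigID (mem [set g j | j in 'I_n])) /=.
  have -> : \sum_(i : 'I_s | i \notin [set g j | j in 'I_n]) (a i nn : R) * (x i nn : R) ^+ d = 0.
    apply: big1 => i hi; rewrite xn // /O0 /Ocst -[((0, 0) : R)]/(0 : R).
    by rewrite expr0n eqn0Ngt dpos mulr0.
  rewrite addr0 big_imset /=; last by move=> j1 j2 _ _ /ginj.
  have -> : \sum_(i in 'I_n) (a (g i) nn : R) * (x (g i) nn : R) ^+ d =
     \sum_(i : 'I_n) ((a (g i) nn : R) - piR D ^+ r i * u i nn) * X i nn ^+ d
     + (piR D) ^+ (l + K * d) * \sum_(i : 'I_n) u i nn * Y i nn ^+ d.
    rewrite mulr_sumr -big_split /=; apply: eq_bigr => j _; rewrite xg.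
    have er : (r j + (K - q j) * d)%N = (l + K * d)%N.
      have [hr _ _ _] := Hu j.
      have := divn_eq (r j) d; rewrite hr -/(q j) => {1}->.
      by rewrite addnAC -mulnDl subnKC ?hqK // addnC.
    rewrite /X exprMn -exprM -er exprD; ring.
  apply: MD; last by apply: MMl.
  apply: (big_ind (M nn)); [exact: M0 | exact: MD |] => j _.
  by apply: MMr; case: (Hu j).
Qed.
End Core.

Lemma at_level_unique D (HD : D = -1 \/ D = -5) m (a : Oseq) l :
  at_level D (2 * m) a l false -> at_level D (2 * m) a l true -> False.
Proof.
move=> /(at_level_data HD) [r [u [_ _ ha hu]]] /(at_level_data HD) [r' [u' [_ _ ha' hu']]].
have hd n : M n ((piR D) ^+ r * u n - (piR D) ^+ r' * u' n).
  have -> : (piR D) ^+ r * u n - (piR D) ^+ r' * u' n =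
    ((a n : zr D) - (piR D) ^+ r' * u' n) - ((a n : zr D) - (piR D) ^+ r * u n) by ring.
  by apply: MB.
have uu n : unitish (u n.+1).
  by apply: (unitish_cong _ (unitish_cpi HD false)); apply: Msym.
have uu' n : unitish (u' n.+1).
  by apply: (unitish_cong _ (unitish_cpi HD true)); apply: Msym.
case: (ltngtP r r') => hrr.
- have h := hd r.+1.
  have E : (r' = r + (r' - r).-1.+1)%N by rewrite prednK ?subn_gt0 // subnKC // ltnW.
  rewrite E exprD exprS -mulrA -mulrBr in h.
  have := cancel_pi HD h => h2.
  apply: (notM1_piw_unit HD (w := (piR D) ^+ (r' - r).-1 * u' r.+1) (uu r)).
  by apply: Msym; rewrite mulrA.
- have h := hd r'.+1.
  have E : (r = r' + (r - r').-1.+1)%N by rewrite prednK ?subn_gt0 // subnKC // ltnW.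
  rewrite E exprD exprS -mulrA -mulrBr in h.
  have := cancel_pi HD h => h2.
  by apply: (notM1_piw_unit HD (w := (piR D) ^+ (r - r').-1 * u r'.+1) (uu' r')); rewrite mulrA.
- have h := hd r.+1; rewrite -hrr -mulrBr in h.
  have h2 := cancel_pi HD h.
  apply: (notM1_pi (D := D)).
  have h3 : M 1 ((cpi false : zr D) - cpi true).
    have -> : (cpi false : zr D) - cpi true =
      - ((u r.+1 - cpi false) - (u' r.+1 - cpi true)) + (u r.+1 - u' r.+1) by ring.
    by apply: MD => //; apply: MN; apply: MB.
  have := MN h3; rewrite opprB.
  move=> h4; exact h4.
Qed.

Lemma tab_pat D (HD : D = -1 \/ D = -5) c : tabb D 5 (fun _ => c).
Proof.
by case: HD => ->; case: c; have /and4P [? ? ? ?] := tab5.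
Qed.
Lemma tab_33 D (HD : D = -1 \/ D = -5) : tabb D 6 pat33.
Proof. by case: HD => ->; have /andP [? ?] := tab6. Qed.

Lemma pick_inj (s k : nat) (S : {set 'I_s}) : (k <= #|S|)%N ->
  exists g : 'I_k -> 'I_s, injective g /\ forall j, g j \in S.
Proof.
move=> hk; exists (fun j => enum_val (widen_ord hk j)); split.
- by move=> j1 j2 /enum_val_inj /(congr1 val) /= /val_inj.
- by move=> j; apply: enum_valP.
Qed.

Unset Implicit Arguments.
Theorem lemma10 (D : int) (m d s : nat) (a : 'I_s -> Oseq) :
  (D = -1 \/ D = -5) ->
  odd m -> (3 <= m)%N -> d = (2 * m)%N ->
  (forall i, inO (a i) /\ ~ eqO (a i) O0) ->
  (exists l : nat, (l < d)%N /\
     ((exists (c : bool) (S : {set 'I_s}),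
          (5 <= #|S|)%N /\ (forall i, i \in S -> at_level D d (a i) l c))
      \/
      (exists S0 S1 : {set 'I_s},
          (3 <= #|S0|)%N /\ (3 <= #|S1|)%N /\
          (forall i, i \in S0 -> at_level D d (a i) l false) /\
          (forall i, i \in S1 -> at_level D d (a i) l true)))) ->
  exists x : 'I_s -> Oseq,
    (forall i, inO (x i)) /\ (exists i, ~ eqO (x i) O0) /\
    eqO (diag_form D d a x) O0.
Proof.
move=> HD modd _ -> _ [l [_ [[c [S [hS HS]]] | [S0 [S1 [h0 [h1 [HS0 HS1]]]]]]]].
- have [g [ginj gS]] := pick_inj hS.
  apply: (@core D HD m modd l 5 (fun _ => c) s a g (tab_pat HD c) ginj).
  by move=> j; apply: HS.
- have [g0 [g0inj g0S]] := pick_inj h0.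
  have [g1 [g1inj g1S]] := pick_inj h1.
  pose g (j : 'I_6) : 'I_s := if (j < 3)%N then g0 (inord j) else g1 (inord (j - 3)).
  have disj j1 j2 : g0 j1 != g1 j2.
    apply/eqP => E; apply: (at_level_unique HD (m := m) (a := a (g0 j1)) (l := l)).
    + exact: HS0.
    + by rewrite E; apply: HS1.
  apply: (@core D HD m modd l 6 pat33 s a g (tab_33 HD)).
  + move=> j1 j2; rewrite /g.
    case: ifP => hj1; case: ifP => hj2.
    * move/g0inj/(congr1 (@nat_of_ord 3)); rewrite !inordK // => E; exact: val_inj.
    * by move=> E; have := disj (inord j1) (inord (j2 - 3)); rewrite E eqxx.
    * by move=> E; have := disj (inord j2) (inord (j1 - 3)); rewrite E eqxx.
    * move/g1inj/(congr1 (@nat_of_ord 3)); rewrite !inordK; last 2 first.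
      - by have := ltn_ord j2; lia.
      - by have := ltn_ord j1; lia.
      move=> E; apply: val_inj => /=; move: hj1 hj2 E; lia.
  + move=> j; rewrite /g /pat33; case: ifP => hj.
    * by rewrite leqNgt hj; apply: HS0.
    * by rewrite leqNgt hj; apply: HS1.
Qed.
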